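(* Let $\mathcal X$ be a set, $k:\mathcal X\times\mathcal X\to\mathbb R$ any positive-semidefinite kernel, and define $\tilde k(x,x')=k(x,x)$ if $x=x'$ and $\tilde k(x,x')=0$ if $x\ne x'$. Let $x_1,x_2,\dots\in\mathcal X$ be any points (repetitions allowed) with observations, and for $t\ge0$ let $\sigma_t^2$ and $\tilde\sigma_t^2$ denote the GP posterior predictive variances, with Gaussian noise variance $\sigma_\epsilon^2>0$, of GP models with prior covariance $k$ and $\tilde k$ respectively, both conditioned on the observations at $x_1,\dots,x_t$. Then for all $t\ge0$ and all $x\in\mathcal X$, $$\sigma_t^2(x)\le\tilde\sigma_t^2(x)=\frac{\sigma_\epsilon^2\,\tilde\sigma_0^2(x)}{\sigma_\epsilon^2+N_t(x)\,\tilde\sigma_0^2(x)},$$ where $N_t(x)=\sum_{i=1}^t\mathbb 1\{x_i=x\}$ and $\tilde\sigma_0^2(x)=\sigma_0^2(x)=k(x,x)$.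
   Context: For a prior covariance $c$ and observation points $x_1,\dots,x_t$, the GP posterior variance with noise variance $\sigma_\epsilon^2$ is $\sigma_t^2(x)=c(x,x)-\mathbf c_t(x)^\top(\mathbf C_t+\sigma_\epsilon^2I)^{-1}\mathbf c_t(x)$, where $\mathbf c_t(x)=[c(x,x_i)]_{i=1}^t$ and $\mathbf C_t=[c(x_i,x_j)]_{i,j=1}^t$; for $t=0$ it is $c(x,x)$. It does not depend on the observed values. *)

(* Defs.v *)
From HB Require Import structures.
From mathcomp Require Import all_boot all_order all_algebra.
From mathcomp Require Import boolp reals.
Set Implicit Arguments. Unset Strict Implicit. Unset Printing Implicit Defensive.
Import Order.TTheory GRing.Theory Num.Theory.
Local Open Scope ring_scope.

Definition psd_kernel (R : realType) (X : Type) (k : X -> X -> R) : Prop :=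
  (forall x y, k x y = k y x) /\
  (forall (n : nat) (pts : 'I_n -> X) (c : 'I_n -> R),
      0 <= \sum_(i < n) \sum_(j < n) c i * c j * k (pts i) (pts j)).

Definition diag_kernel (R : realType) (X : Type) (k : X -> X -> R) : X -> X -> R :=
  fun x x' => if `[< x = x' >] then k x x else 0.

(* c_t(x) = [c(x, x_i)]_{i=1..t} (index i : 'I_t stands for x_{i+1}). *)
Definition kvec (R : realType) (X : Type) (c : X -> X -> R) (xs : nat -> X)
  (t : nat) (x : X) : 'cV[R]_t := \col_(i < t) c x (xs i).

Definition kmat (R : realType) (X : Type) (c : X -> X -> R) (xs : nat -> X)
  (t : nat) : 'M[R]_t := \matrix_(i < t, j < t) c (xs i) (xs j).

Definition post_var (R : realType) (X : Type) (c : X -> X -> R) (s2 : R)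
  (xs : nat -> X) (t : nat) (x : X) : R :=
  c x x - ((kvec c xs t x)^T *m invmx (kmat c xs t + s2%:M) *m kvec c xs t x) 0 0.

Definition count_obs (R : realType) (X : Type) (xs : nat -> X) (t : nat) (x : X) : R :=
  \sum_(i < t) (if `[< xs i = x >] then 1 else 0).

(* Main.v *)
Require Import Defs.
From HB Require Import structures.
From mathcomp Require Import all_boot all_order all_algebra.
From mathcomp Require Import boolp reals ring lra.
Set Implicit Arguments. Unset Strict Implicit. Unset Printing Implicit Defensive.
Import Order.TTheory GRing.Theory Num.Theory.
Local Open Scope ring_scope.


Definition Bs {R : realType} t (M : 'M[R]_t) (z y : 'cV[R]_t) :=
  \sum_(i < t) \sum_(j < t) z i 0 * M i j * y j 0.

Lemma BsE {R : realType} t (M : 'M[R]_t) z y : (z^T *m M *m y) 0 0 = Bs M z y.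
Proof.
rewrite /Bs mxE exchange_big; apply: eq_bigr => j _.
rewrite mxE big_distrl; apply: eq_bigr => i _; by rewrite !mxE.
Qed.

Lemma dotC {R : realType} t (u v : 'cV[R]_t) : (u^T *m v) 0 0 = (v^T *m u) 0 0.
Proof. rewrite !mxE; apply: eq_bigr => i _; by rewrite !mxE mulrC. Qed.

Lemma BsC {R : realType} t (M : 'M[R]_t) z y : (forall i j, M i j = M j i) -> Bs M z y = Bs M y z.
Proof.
move=> HM; rewrite /Bs exchange_big; apply: eq_bigr => i _; apply: eq_bigr => j _.
by rewrite (HM j i); ring. Qed.

Definition Mk {R : realType} (X : Type) (c : X -> X -> R) (s2 : R) (xs : nat -> X) t :=
  kmat c xs t + s2%:M.

Lemma Bs_split {R : realType} (X : Type) (c : X -> X -> R) (s2 : R) (xs : nat -> X) t z :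
  Bs (Mk c s2 xs t) z z =
  \sum_(i < t) \sum_(j < t) z i 0 * z j 0 * c (xs i) (xs j) + s2 * \sum_(i < t) z i 0 ^+ 2.
Proof.
rewrite /Bs big_distrr -big_split /=; apply: eq_bigr => i _.
rewrite (bigD1 i) //= [X in _ = X + _](bigD1 i) //= !mxE eqxx mulr1n.
have -> : \sum_(i0 < t | i0 != i) z i 0 * Mk c s2 xs t i i0 * z i0 0 =
   \sum_(i0 < t | i0 != i) z i 0 * z i0 0 * c (xs i) (xs i0).
  by apply: eq_bigr => j ne; rewrite !mxE eq_sym (negbTE ne) mulr0n addr0; ring.
ring.
Qed.

Definition psd_on {R : realType} (X : Type) (c : X -> X -> R) (xs : nat -> X) t :=
  forall z : 'I_t -> R, 0 <= \sum_(i < t) \sum_(j < t) z i * z j * c (xs i) (xs j).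

Lemma Bs_ge0 {R : realType} (X : Type) (c : X -> X -> R) (s2 : R) (xs : nat -> X) t z :
  0 < s2 -> psd_on c xs t -> 0 <= Bs (Mk c s2 xs t) z z.
Proof.
move=> s2p psd; rewrite Bs_split; apply: addr_ge0; first exact: (psd (fun i => z i 0)).
apply: mulr_ge0; first exact: ltW.
by apply: sumr_ge0 => i _; exact: sqr_ge0.
Qed.

Lemma Mk_unit {R : realType} (X : Type) (c : X -> X -> R) (s2 : R) (xs : nat -> X) t :
  0 < s2 -> psd_on c xs t -> Mk c s2 xs t \in unitmx.
Proof.
move=> s2p psd; rewrite unitmxE unitfE; apply/negP => /det0P [v nz vM].
have H : Bs (Mk c s2 xs t) v^T v^T = 0 by rewrite -BsE trmxK vM mul0mx mxE.
move: H; rewrite Bs_split => H.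
have h1 := psd (fun i => v^T i 0).
have h2 : 0 <= \sum_(i < t) v^T i 0 ^+ 2 by apply: sumr_ge0 => i _; exact: sqr_ge0.
have Hs : \sum_(i < t) v^T i 0 ^+ 2 = 0 by nra.
move/negP: nz; apply; apply/eqP/matrixP => a b; rewrite (ord1 a) !mxE.
have := @psumr_eq0P _ _ _ _ (fun i _ => sqr_ge0 (v^T i 0)) Hs b isT.
by rewrite mxE => /eqP; rewrite sqrf_eq0 => /eqP.
Qed.

Lemma BsBl {R : realType} t (M : 'M[R]_t) w u y : Bs M (w - u) y = Bs M w y - Bs M u y.
Proof.
rewrite /Bs -sumrB; apply: eq_bigr => i _; rewrite -sumrB; apply: eq_bigr => j _.
rewrite !mxE; ring.
Qed.

Lemma BsBr {R : realType} t (M : 'M[R]_t) w u y : Bs M y (w - u) = Bs M y w - Bs M y u.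
Proof.
rewrite /Bs -sumrB; apply: eq_bigr => i _; rewrite -sumrB; apply: eq_bigr => j _.
rewrite !mxE; ring.
Qed.

Lemma Mk_sym {R : realType} (X : Type) (c : X -> X -> R) (s2 : R) (xs : nat -> X) t :
  (forall x y, c x y = c y x) -> forall i j, Mk c s2 xs t i j = Mk c s2 xs t j i.
Proof. by move=> cs i j; rewrite !mxE cs eq_sym. Qed.

Lemma var_ineq {R : realType} (X : Type) (c : X -> X -> R) (s2 : R) (xs : nat -> X) t (cv w : 'cV[R]_t) :
  0 < s2 -> psd_on c xs t -> (forall x y, c x y = c y x) ->
  2 * (w^T *m cv) 0 0 - Bs (Mk c s2 xs t) w w <= (cv^T *m invmx (Mk c s2 xs t) *m cv) 0 0.
Proof.
move=> s2p psd cs.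
set M := Mk c s2 xs t.
have Mu : M *m (invmx M *m cv) = cv by rewrite mulKVmx // Mk_unit.
set u := invmx M *m cv.
have h := Bs_ge0 (w - u) s2p psd.
have e3 : Bs M u w = Bs M w u by apply: BsC; exact: Mk_sym.
rewrite -/M BsBl !BsBr e3 in h.
have e1 : Bs M w u = (w^T *m cv) 0 0 by rewrite -BsE -mulmxA Mu.
have e2 : Bs M u u = (cv^T *m invmx M *m cv) 0 0 by rewrite -BsE -mulmxA Mu dotC mulmxA.
rewrite e1 e2 in h; lra.
Qed.

Lemma solve_eq {R : realType} (X : Type) (c : X -> X -> R) (s2 : R) (xs : nat -> X) t (cv w : 'cV[R]_t) :
  0 < s2 -> psd_on c xs t -> Mk c s2 xs t *m w = cv ->
  (cv^T *m invmx (Mk c s2 xs t) *m cv) 0 0 = (cv^T *m w) 0 0.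
Proof. by move=> s2p psd Hw; rewrite -mulmxA -{2}Hw mulKmx // Mk_unit. Qed.


Lemma diag_psd {R : realType} (X : Type) (k : X -> X -> R) (xs : nat -> X) t :
  (forall y, 0 <= k y y) -> psd_on (diag_kernel k) xs t.
Proof.
move=> k0 z.
pose S y := \sum_(j < t) (if `[< xs j = y >] then z j else 0).
pose n y := \sum_(j < t) (if `[< xs j = y >] then 1 else 0) : R.
have step1 : \sum_(i < t) \sum_(j < t) z i * z j * diag_kernel k (xs i) (xs j) =
   \sum_(i < t) z i * k (xs i) (xs i) * S (xs i).
  apply: eq_bigr => i _; rewrite /S big_distrr; apply: eq_bigr => j _ /=; rewrite /diag_kernel.
  case: (asboolP (xs i = xs j)) => h; case: (asboolP (xs j = xs i)) => h'.
  - ring.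
  - by exfalso; apply: h'.
  - by exfalso; apply: h.
  - ring.
have npos : forall i : 'I_t, 0 < n (xs i).
  move=> i; rewrite /n (bigD1 i) //= asboolT //.
  have : 0 <= \sum_(j < t | j != i) (if `[< xs j = xs i >] then 1 else 0 : R).
    by apply: sumr_ge0 => j _; case: ifP => _ //; exact: ler01.
  lra.
have step2 : \sum_(i < t) z i * k (xs i) (xs i) * S (xs i) =
    \sum_(i < t) k (xs i) (xs i) * S (xs i) ^+ 2 / n (xs i).
  symmetry.
  transitivity (\sum_(i < t) \sum_(j < t)
     (if `[< xs j = xs i >] then k (xs i) (xs i) * S (xs i) / n (xs i) * z j else 0)).
    apply: eq_bigr => i _.
    have -> : k (xs i) (xs i) * S (xs i) ^+ 2 / n (xs i) =
              (k (xs i) (xs i) * S (xs i) / n (xs i)) * S (xs i) by ring.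
    rewrite [X in _ * X = _]/S big_distrr; apply: eq_bigr => j _ /=.
    by case: ifP => _; ring.
  rewrite exchange_big; apply: eq_bigr => j _.
  transitivity (\sum_(i < t)
     (if `[< xs i = xs j >] then k (xs j) (xs j) * S (xs j) / n (xs j) * z j else 0)).
    apply: eq_bigr => i _.
    case: (asboolP (xs j = xs i)) => h; case: (asboolP (xs i = xs j)) => h'.
    - by rewrite h.
    - by exfalso; apply: h'.
    - by exfalso; apply: h.
    - by [].
  transitivity (k (xs j) (xs j) * S (xs j) / n (xs j) * z j * n (xs j)).
    rewrite [RHS]mulrC [X in _ = X * _]/n [RHS]big_distrl; apply: eq_bigr => i _ /=.
    by case: ifP => _; ring.
  have := npos j; rewrite lt0r => /andP [nz _].
  by field.
rewrite step1 step2; apply: sumr_ge0 => i _.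
apply: divr_ge0; last exact: ltW.
by apply: mulr_ge0; [exact: k0 | exact: sqr_ge0].
Qed.


Theorem mainTheorem4 (R : realType) (X : Type) (k : X -> X -> R)
  (xs : nat -> X) (s2 : R) :
  psd_kernel k -> 0 < s2 ->
  forall (t : nat) (x : X),
    post_var k s2 xs t x <= post_var (diag_kernel k) s2 xs t x /\
    post_var (diag_kernel k) s2 xs t x =
      s2 * post_var (diag_kernel k) s2 xs 0 x /
        (s2 + count_obs R xs t x * post_var (diag_kernel k) s2 xs 0 x) /\
    post_var (diag_kernel k) s2 xs 0 x = post_var k s2 xs 0 x /\
    post_var k s2 xs 0 x = k x x.
Proof.
move=> [ksym kpsd] s2p t x.
have k0 : forall y, 0 <= k y y.
  move=> y; have := kpsd 1%N (fun _ => y) (fun _ => 1).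
  by rewrite !big_ord1 !mul1r.
have P0 : forall c : X -> X -> R, post_var c s2 xs 0 x = c x x.
  by move=> c; rewrite /post_var [X in _ - X]mxE big_ord0 subr0.
have dxx : diag_kernel k x x = k x x by rewrite /diag_kernel asboolT.
rewrite !P0 dxx.
set a := k x x.
set N := count_obs R xs t x.
have N0 : 0 <= N by apply: sumr_ge0 => i _; case: ifP => _ //; exact: ler01.
have a0 : 0 <= a by exact: k0.
set D := s2 + N * a.
have Dp : 0 < D by rewrite /D; have := mulr_ge0 N0 a0; lra.
have kpsd' : psd_on k xs t by move=> z; exact: (kpsd t (fun i => xs i) z).
have dpsd : psd_on (diag_kernel k) xs t by exact: diag_psd.
have dsym : forall y y', diag_kernel k y y' = diag_kernel k y' y.
  move=> y y'; rewrite /diag_kernel.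
  case: (asboolP (y = y')) => h; case: (asboolP (y' = y)) => h' //.
  - by rewrite h.
  - by exfalso; apply: h'.
  - by exfalso; apply: h.
pose v : 'cV[R]_t := \col_i (if `[< xs i = x >] then 1 else 0).
pose w : 'cV[R]_t := (a / D) *: v.
pose cd := kvec (diag_kernel k) xs t x.
pose ck := kvec k xs t x.
have cdE : cd = a *: v.
  apply/matrixP => i j; rewrite !mxE /diag_kernel.
  case: (asboolP (x = xs i)) => h; case: (asboolP (xs i = x)) => h'.
  - by rewrite mulr1.
  - by exfalso; apply: h'.
  - by exfalso; apply: h.
  - by rewrite mulr0.
have Mv : Mk (diag_kernel k) s2 xs t *m v = D *: v.
  rewrite /Mk mulmxDl mul_scalar_mx.
  apply/matrixP => i j; rewrite !mxE /D.
  rewrite mulrDl [RHS]addrC; congr (_ + _).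
  case: (asboolP (xs i = x)) => h.
  - rewrite mulr1 /N /count_obs big_distrl /=; apply: eq_bigr => l _; rewrite !mxE /diag_kernel h.
    case: (asboolP (x = xs l)) => h1; case: (asboolP (xs l = x)) => h2.
    + by rewrite mulr1 mul1r.
    + by exfalso; apply: h2.
    + by exfalso; apply: h1.
    + by rewrite mulr0 mul0r.
  - rewrite mulr0; apply: big1 => l _; rewrite !mxE /diag_kernel.
    case: (asboolP (xs i = xs l)) => h1; case: (asboolP (xs l = x)) => h2.
    + by exfalso; apply: h; rewrite h1.
    + by rewrite mulr0.
    + by rewrite mul0r.
    + by rewrite mulr0.
have Mw : Mk (diag_kernel k) s2 xs t *m w = cd.
  rewrite /w -scalemxAr Mv scalerA cdE; congr (_ *: _).
  by field; rewrite gt_eqF.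
have vv : (v^T *m v) 0 0 = N.
  rewrite mxE /N /count_obs; apply: eq_bigr => i _; rewrite !mxE.
  by case: ifP => _; rewrite ?mulr1 ?mulr0.
have Qd : (cd^T *m invmx (Mk (diag_kernel k) s2 xs t) *m cd) 0 0 = a * a / D * N.
  rewrite (solve_eq s2p dpsd Mw) /w cdE linearZ /= linearZ /= -scalemxAl 2!mxE vv.
  ring.
have Bw : Bs (Mk k s2 xs t) w w = a * a / D * N.
  transitivity (Bs (Mk (diag_kernel k) s2 xs t) w w).
    apply: eq_bigr => i _; apply: eq_bigr => j _; rewrite !mxE /diag_kernel.
    case: (asboolP (xs i = x)) => hi; last by rewrite !mulr0 !mul0r.
    case: (asboolP (xs j = x)) => hj; last by rewrite !mulr0.
    by rewrite hi hj asboolT.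
  rewrite -BsE -mulmxA Mw dotC -(solve_eq s2p dpsd Mw) Qd.
  by [].
have wc : (w^T *m ck) 0 0 = a * a / D * N.
  transitivity ((w^T *m cd) 0 0).
    rewrite !mxE; apply: eq_bigr => i _; rewrite !mxE /diag_kernel.
    case: (asboolP (xs i = x)) => hi; last by rewrite !mulr0 !mul0r.
    by rewrite hi asboolT.
  by rewrite dotC -(solve_eq s2p dpsd Mw) Qd.
have Hi := var_ineq ck w s2p kpsd' ksym.
rewrite /post_var -/ck -/cd.
rewrite -[kmat k xs t + s2%:M]/(Mk k s2 xs t) -[kmat (diag_kernel k) xs t + s2%:M]/(Mk (diag_kernel k) s2 xs t).
rewrite Qd dxx; split; first by rewrite wc Bw in Hi; lra.
split=> //.
rewrite -/a; move: Dp; rewrite /D => Dp; field; exact: lt0r_neq0.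
Qed.
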